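(* Let $I_1,\dots,I_s$ be squarefree monomial ideals in $S=\mathbb{K}[x_1,\dots,x_n]$, $\mathbb{K}$ a field. Then (a) $\operatorname{sreg}(S/\sum_{i=1}^s I_i)\le\sum_{i=1}^s\operatorname{sreg}(S/I_i)$, and (b) $\operatorname{sreg}(\bigcap_{i=1}^s I_i)\le\sum_{i=1}^s\operatorname{sreg}(I_i)$.
   Context: Stanley regularity: for a finitely generated squarefree $\mathbb{Z}^n$-graded $S$-module $M$ (such as $S/I$ or $I$ for a squarefree monomial ideal $I$), a squarefree Stanley decomposition of $M$ is a decomposition $M=\bigoplus_{i=1}^r u_i\mathbb{K}[Z_i]$ as $\mathbb{K}$-vector spaces, where $Z_i\subseteq\{x_1,\dots,x_n\}$, each $u_i$ is a homogeneous element of squarefree degree with support contained in $Z_i$, and each $u_i\mathbb{K}[Z_i]$ (the $\mathbb{K}$-span of $u_iv$, $v$ a monomial of $\mathbb{K}[Z_i]$) is free over $\mathbb{K}[Z_i]$. Its Stanley regularity is $\max_i\deg(u_i)$, and $\operatorname{sreg}(M)$ is the minimum of this over all such decompositions. *)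

(* Defs.v *)
From mathcomp Require Import all_boot.
From Stdlib Require Import ClassicalDescription.
Set Implicit Arguments. Unset Strict Implicit. Unset Printing Implicit Defensive.

Definition expv (n : nat) := 'I_n -> nat.

(* a monomial Z^n-graded module is described by the set of exponents of the
   monomials forming its K-basis *)
Definition monset (n : nat) := expv n -> Prop.

(* indicator vector of a squarefree monomial x^F, F a set of variables *)
Definition chi n (F : {set 'I_n}) : expv n := fun j => (j \in F : nat).

Definition sqf_divides n (F : {set 'I_n}) (a : expv n) : Prop :=
  forall j, chi F j <= a j.

Definition mon_ideal n (G : {set {set 'I_n}}) : monset n :=
  fun a => exists2 F, F \in G & sqf_divides F a.

(* monomial basis of S/I (standard monomials) *)
Definition quot_mon n (I : monset n) : monset n := fun a => ~ I a.

(* sum of the ideals generated by G i: generated by the union of generators *)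
Definition sum_ideal n s (G : 'I_s -> {set {set 'I_n}}) : monset n :=
  mon_ideal (\bigcup_(i < s) G i).

Definition inter_ideal n s (G : 'I_s -> {set {set 'I_n}}) : monset n :=
  fun a => forall i, mon_ideal (G i) a.

(* monomials of the Stanley space x^F K[Z]:  x^F * x^v with supp v in Z *)
Definition in_space n (F Z : {set 'I_n}) (a : expv n) : Prop :=
  exists v : expv n, (forall j, j \notin Z -> v j = 0) /\
                     (forall j, a j = chi F j + v j).

(* a squarefree Stanley decomposition M = (+)_i x^(F_i) K[Z_i]:
   F_i \subset Z_i, each piece is free (no monomial of x^F_i K[Z_i] vanishes
   in M, i.e. all lie in the monomial basis of M), and the pieces give a
   direct sum equal to M (each basis monomial lies in exactly one piece). *)
Definition stanley_dec n (M : monset n) (D : seq ({set 'I_n} * {set 'I_n})) : Prop :=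
  [/\ forall p, p \in D -> p.1 \subset p.2,
      forall p a, p \in D -> in_space p.1 p.2 a -> M a
    & forall a, M a -> exists! i : 'I_(size D),
        in_space (nth (set0, set0) D i).1 (nth (set0, set0) D i).2 a].

Definition dec_sreg n (D : seq ({set 'I_n} * {set 'I_n})) : nat :=
  \max_(p <- D) #|p.1|.

Definition sreg_le n (M : monset n) (r : nat) : Prop :=
  exists2 D, stanley_dec M D & dec_sreg D <= r.

Definition sreg_pred n (M : monset n) : pred nat :=
  fun r => if excluded_middle_informative (sreg_le M r) then true else false.

(* sreg M = minimum over all squarefree Stanley decompositions
   (defaults to 0 if there is none, which never happens for S/I, I) *)
Definition sreg n (M : monset n) : nat :=
  match excluded_middle_informative (exists r, sreg_pred M r) with
  | left h => ex_minn h
  | right _ => 0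
  end.

(* Main.v *)
Require Import Defs.
From mathcomp Require Import all_boot.
From Stdlib Require Import ClassicalDescription.
Set Implicit Arguments. Unset Strict Implicit. Unset Printing Implicit Defensive.

Section Sec.
Variable n : nat.
Notation piece := ({set 'I_n} * {set 'I_n})%type.

Definition inspb (p : piece) (a : expv n) : bool :=
  [forall j, ((j \in p.1) <= a j) && ((j \notin p.2) ==> (a j == 0))].

Lemma inspP (p : piece) a : p.1 \subset p.2 ->
  (in_space p.1 p.2 a <-> inspb p a).
Proof.
move=> /subsetP sub; split.
- case=> v [v0 av]; apply/forallP=> j; rewrite av /chi.
  apply/andP; split; first exact: leq_addr.
  apply/implyP=> jn; rewrite v0 // addn0.
  by case: (boolP (j \in p.1)) => // /sub; rewrite (negbTE jn).
- move=> /forallP H; exists (fun j => a j - chi p.1 j); split.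
  + move=> j jn; have /andP[_ /implyP/(_ jn)/eqP ->] := H j; by [].
  + move=> j; have /andP[h _] := H j; by rewrite subnKC.
Qed.

Lemma count_ex1 (D : seq piece) (b : pred piece) :
  (exists! i : 'I_(size D), b (nth (set0,set0) D i)) <-> count b D = 1.
Proof.
have E : count b D = #|[set i : 'I_(size D) | b (nth (set0,set0) D i)]|.
  rewrite -sum1_count (big_nth (set0,set0)) big_mkord -sum1_card.
  by apply: eq_bigl => i; rewrite inE.
rewrite E; split.
- case=> i [bi u]; apply/eqP/cards1P; exists i; apply/setP=> j.
  rewrite !inE; apply/idP/eqP; last by move=> ->.
  by move=> bj; rewrite (u j bj).
- move/eqP/cards1P=> [i Hi]; exists i; split.
  + by have := set11 i; rewrite -Hi inE.
  + by move=> j bj; have : j \in [set i]; [rewrite -Hi inE | rewrite inE => /eqP].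
Qed.

Definition dec' (M : monset n) (D : seq piece) :=
  [/\ forall p, p \in D -> p.1 \subset p.2,
      forall p a, p \in D -> inspb p a -> M a
    & forall a, M a -> count (inspb^~ a) D = 1].

Lemma decE M D : stanley_dec M D <-> dec' M D.
Proof.
split.
- case=> h1 h2 h3; split => //.
  + by move=> p a pD /(inspP a (h1 p pD)); apply: h2.
  + move=> a Ma; apply/(count_ex1 D (inspb^~ a)).
    case: (h3 a Ma) => i [Hi u]; exists i; split.
    * by apply/inspP => //; apply: h1; apply: mem_nth; apply: ltn_ord.
    * move=> j Hj; apply: u; apply/inspP => //; apply: h1; apply: mem_nth; apply: ltn_ord.
- case=> h1 h2 h3; split => //.
  + by move=> p a pD /(inspP a (h1 p pD)); apply: h2.
  + move=> a Ma; have := h3 a Ma; move/(count_ex1 D (inspb^~ a)).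
    case=> i [Hi u]; exists i; split.
    * by apply/inspP => //; apply: h1; apply: mem_nth; apply: ltn_ord.
    * move=> j Hj; apply: u; apply/inspP => //; apply: h1; apply: mem_nth; apply: ltn_ord.
Qed.


Lemma count_allpairs_mul (T1 T2 T3 : Type) (f : T1 -> T2 -> T3) (c : pred T3)
  (c1 : pred T1) (c2 : pred T2) s t :
  (forall x y, c (f x y) = c1 x && c2 y) ->
  count c [seq f x y | x <- s, y <- t] = count c1 s * count c2 t.
Proof.
move=> H; elim: s => [//|x s IH]; rewrite allpairs_cons count_cat IH count_map /=.
rewrite mulnDl; congr (_ + _).
case Cx: (c1 x) => /=; rewrite ?mul1n ?mul0n.
- by apply: eq_count => y /=; rewrite H Cx.
- by rewrite (eq_count (a2 := pred0)) ?count_pred0 // => y /=; rewrite H Cx.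
Qed.

Definition pmul (p q : piece) : piece := (p.1 :|: q.1, p.2 :&: q.2).

Definition prodD (D1 D2 : seq piece) : seq piece :=
  filter (fun x : piece => x.1 \subset x.2) [seq pmul p q | p <- D1, q <- D2].

Lemma inspb_mul p q a :
  ((pmul p q).1 \subset (pmul p q).2) && inspb (pmul p q) a = inspb p a && inspb q a.
Proof.
rewrite /inspb /pmul /=; apply/idP/idP.
- case/andP=> _ /forallP H; apply/andP; split; apply/forallP => j;
  have /andP[h1 /implyP h2] := H j; rewrite !inE in h1 h2.
  + apply/andP; split; first by case: (j \in p.1) h1 => //; case: (j \in q.1).
    by apply/implyP => jn; apply: h2; rewrite negb_and jn.
  + apply/andP; split; first by case: (j \in q.1) h1 => //; rewrite orbT.
    by apply/implyP => jn; apply: h2; rewrite negb_and jn orbT.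
- case/andP=> /forallP H1 /forallP H2.
  have Hz : forall j, j \in p.1 :|: q.1 -> j \in p.2 :&: q.2.
    move=> j; rewrite !inE => jF.
    have /andP[a1 /implyP b1] := H1 j; have /andP[a2 /implyP b2] := H2 j.
    have apos : 0 < a j by case/orP: jF => [h|h]; [rewrite h in a1|rewrite h in a2].
    apply/andP; split; apply/negPn/negP => jn;
      [have := b1 jn | have := b2 jn]; by move=> /eqP e; move: apos; rewrite e.
  apply/andP; split; first by apply/subsetP.
  apply/forallP=> j; have /andP[a1 /implyP b1] := H1 j; have /andP[a2 /implyP b2] := H2 j.
  apply/andP; split.
  + rewrite inE; by case: (j \in p.1) a1; case: (j \in q.1) a2.
  + apply/implyP; rewrite inE negb_and => /orP[jn|jn]; [exact: b1|exact: b2].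
Qed.

Lemma prod_dec M1 M2 D1 D2 : dec' M1 D1 -> dec' M2 D2 ->
  dec' (fun a => M1 a /\ M2 a) (prodD D1 D2).
Proof.
case=> h1 h2 h3 [k1 k2 k3]; split.
- by move=> p; rewrite mem_filter => /andP[].
- move=> p a; rewrite mem_filter => /andP[sub pin] ins.
  case/allpairsP: pin => [[x y] [/= xD yD E]]; subst p.
  have : inspb x a && inspb y a by rewrite -inspb_mul sub ins.
  by case/andP=> i1 i2; split; [apply: (h2 x) | apply: (k2 y)].
- move=> a [Ma Mb]; rewrite /prodD count_filter.
  rewrite (count_allpairs_mul (c1 := inspb^~ a) (c2 := inspb^~ a)).
  + by rewrite h3 // k3.
  + by move=> x y /=; rewrite andbC -inspb_mul.
Qed.

Lemma prod_sreg D1 D2 : dec_sreg (prodD D1 D2) <= dec_sreg D1 + dec_sreg D2.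
Proof.
apply/bigmax_leqP_seq => p; rewrite mem_filter => /andP[_ /allpairsP[[x y] [/= xD yD ->]]] _.
rewrite /pmul /= cardsU.
have h1 : #|x.1| <= dec_sreg D1 by rewrite /dec_sreg (big_rem _ xD) /= leq_maxl.
have h2 : #|y.1| <= dec_sreg D2 by rewrite /dec_sreg (big_rem _ yD) /= leq_maxl.
by apply: leq_trans (leq_subr _ _) (leq_add h1 h2).
Qed.

Definition supp (a : expv n) : {set 'I_n} := [set j | 0 < a j].

Lemma inspb_diag X a : inspb (X, X) a = (supp a == X).
Proof.
rewrite /inspb /=; apply/forallP/eqP.
- move=> H; apply/setP=> j; rewrite inE; have /andP[h1 /implyP h2] := H j.
  case: (boolP (j \in X)) => jS; first by rewrite lt0n; move: h1; rewrite jS; case: (a j).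
  by rewrite (eqP (h2 jS)).
- move=> <- j; rewrite !inE; case: (a j) => //=.
Qed.

Lemma supp_dec M (P : pred {set 'I_n}) : (forall a, M a <-> P (supp a)) ->
  dec' M [seq (X, X) | X <- enum {set 'I_n} & P X].
Proof.
move=> HM; split.
- by move=> p /mapP [X _ ->].
- move=> p a /mapP [X]; rewrite mem_filter => /andP[PS _] -> .
  by rewrite inspb_diag => /eqP e; apply/HM; rewrite e.
- move=> a /HM Pa; rewrite count_map count_filter.
  rewrite (eq_count (a2 := pred1 (supp a))); last first.
    move=> X /=; rewrite inspb_diag; case: (eqVneq X (supp a)) => [->|ne]; first by rewrite Pa ?eqxx.
    by [] || by rewrite eq_sym (negbTE ne).
  by rewrite count_uniq_mem ?enum_uniq // mem_enum.
Qed.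

Lemma sreg_leP (M : monset n) r : sreg_le M r -> sreg M <= r.
Proof.
move=> H; have Pr : sreg_pred M r.
  by rewrite /sreg_pred; case: excluded_middle_informative.
rewrite /sreg; case: excluded_middle_informative => [h|[]]; last by exists r.
by case: ex_minnP => m _ /(_ r Pr).
Qed.

Lemma sreg_spec (M : monset n) D : stanley_dec M D -> sreg_le M (sreg M).
Proof.
move=> HD; rewrite /sreg; case: excluded_middle_informative => [h|[]]; last first.
  exists (dec_sreg D); rewrite /sreg_pred; case: excluded_middle_informative => // [[]].
  by exists D.
case: ex_minnP => m; rewrite /sreg_pred; by case: excluded_middle_informative.
Qed.

Lemma dec_ext (M M' : monset n) D : (forall a, M a <-> M' a) -> dec' M D -> dec' M' D.
Proof.
move=> E [h1 h2 h3]; split => //.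
- by move=> p a pD ins; apply/E; apply: (h2 p).
- by move=> a /E; apply: h3.
Qed.

Lemma key s (M : 'I_s -> monset n) (r : seq 'I_s) :
  (forall i, exists D, stanley_dec (M i) D) ->
  sreg_le (fun a => forall i, i \in r -> M i a) (\sum_(i <- r) sreg (M i)).
Proof.
move=> HM; elim: r => [|i r IH].
- rewrite big_nil; exists [:: (set0, setT)]; last by rewrite /dec_sreg big_cons big_nil cards0.
  apply/decE; split.
  + by move=> p; rewrite inE => /eqP ->; apply: subsetT.
  + by [].
  + move=> a _ /=; suff -> : inspb (set0, setT) a by []. by apply/forallP => j; rewrite inE in_setT.
- rewrite big_cons; case: (HM i) => D0 /sreg_spec [D1 H1 s1].
  case: IH => D2 H2 s2.
  exists (prodD D1 D2).
  + apply/decE; apply: (dec_ext (M := fun a => M i a /\ (forall j, j \in r -> M j a))).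
    * move=> a; split.
      - by case=> h1 h2 j; rewrite inE => /orP[/eqP ->|]; [|apply: h2].
      - by move=> h; split; [apply: h; rewrite mem_head | move=> j jr; apply: h; rewrite inE jr orbT].
    * by apply: prod_dec; apply/decE.
  + by apply: leq_trans (prod_sreg _ _) (leq_add s1 s2).
Qed.

End Sec.

Theorem lemma5p2 (n s : nat) (G : 'I_s -> {set {set 'I_n}}) :
  sreg (quot_mon (sum_ideal G)) <= \sum_(i < s) sreg (quot_mon (mon_ideal (G i)))
  /\ sreg (inter_ideal G) <= \sum_(i < s) sreg (mon_ideal (G i)).
Proof.
have sqfE : forall (F : {set 'I_n}) a, sqf_divides F a <-> F \subset supp a.
  move=> F a; split.
  - move=> H; apply/subsetP => j jF; have := H j; by rewrite /chi jF inE.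
  - move=> /subsetP H j; rewrite /chi; case: (boolP (j \in F)) => // /H; by rewrite inE.
have monE : forall (H : {set {set 'I_n}}) a,
    mon_ideal H a <-> [exists F in H, F \subset supp a].
  move=> H a; split.
  - by case=> F FH /sqfE sub; apply/existsP; exists F; rewrite FH.
  - by case/existsP=> F /andP[FH sub]; exists F => //; apply/sqfE.
split.
- have HM : forall i, exists D, stanley_dec (quot_mon (mon_ideal (G i))) D.
    move=> i; eexists; apply/decE; apply: (supp_dec (P := fun X => ~~ [exists F in G i, F \subset X])).
    by move=> a; rewrite /quot_mon; split => [h|/negP h1 h2]; [apply/negP => /monE| apply: h1; apply/monE].
  have := key (enum 'I_s) HM; rewrite big_enum /= => -[D HD sD].
  apply: sreg_leP; exists D => //; apply/decE.
  apply: dec_ext (iffLR (decE _ _) HD) => a; split.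
  + move=> h; rewrite /quot_mon /sum_ideal => /monE /existsP [F /andP[]].
    move=> /bigcupP [i _ FG] sub; apply: (h i (mem_enum _ i)); apply/monE.
    by apply/existsP; exists F; rewrite FG.
  + move=> h i _ /monE /existsP [F /andP [FG sub]]; apply: h; apply/monE.
    by apply/existsP; exists F; rewrite sub andbT; apply/bigcupP; exists i.
- have HM : forall i, exists D, stanley_dec (mon_ideal (G i)) D.
    move=> i; eexists; apply/decE; apply: (supp_dec (P := fun X => [exists F in G i, F \subset X])).
    by move=> a; apply: monE.
  have := key (enum 'I_s) HM; rewrite big_enum /= => -[D HD sD].
  apply: sreg_leP; exists D => //; apply/decE.
  apply: dec_ext (iffLR (decE _ _) HD) => a; split.
  + by move=> h i; apply: h; rewrite mem_enum.
  + by move=> h i _; apply: h.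
Qed.
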